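(* Let $F:\mathbb R^n\to\mathbb R^n$ be a monotone $\ell$-Lipschitz operator. Let $z^{(0)},z^{(-1)}\in\mathbb R^n$ and suppose there is $z^*$ with $F(z^* )=0$ and $\max\{\|z^*-z^{(0)}\|,\|z^*-z^{(-1)}\|\}\le D$. Let $\eta<\frac1{\ell\sqrt{10}}$ and let $z^{(t)}$ be the iterates $z^{(t+1)}=z^{(t)}-2\eta F(z^{(t)})+\eta F(z^{(t-1)})$, $t\ge0$. Then for every integer $T\ge1$, $$\min_{0\le t\le T-1}\|F(z^{(t)})\|\le\frac{4D}{\eta\sqrt T\sqrt{1-10\eta^2\ell^2}}.$$ More generally, for every integer $S\ge1$ with $S<T/3$, $$\min_{0\le t\le T-S}\ \max_{0\le s<S}\|F(z^{(t+s)})\|\le\frac{6D}{\eta\sqrt{T/S}\sqrt{1-10\eta^2\ell^2}}.$$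
   Context: $F$ is monotone if $\langle F(z')-F(z),z'-z\rangle\ge0$ for all $z,z'$. *)

(* Defs.v *)
From mathcomp Require Import all_boot all_order all_algebra.
From mathcomp Require Import reals.
Set Implicit Arguments. Unset Strict Implicit. Unset Printing Implicit Defensive.
Import Order.TTheory GRing.Theory Num.Theory.
Local Open Scope ring_scope.

Definition dotv (R : realType) (n : nat) (u v : 'rV[R]_n) : R :=
  \sum_(i < n) u ord0 i * v ord0 i.

Definition enorm (R : realType) (n : nat) (u : 'rV[R]_n) : R :=
  Num.sqrt (dotv u u).

Definition monotone_op (R : realType) (n : nat) (F : 'rV[R]_n -> 'rV[R]_n) :=
  forall z z' : 'rV[R]_n, 0 <= dotv (F z' - F z) (z' - z).

Definition lipschitz_op (R : realType) (n : nat) (l : R) (F : 'rV[R]_n -> 'rV[R]_n) :=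
  forall z z' : 'rV[R]_n, enorm (F z' - F z) <= l * enorm (z' - z).

(* Main.v *)
Require Import Defs.
From mathcomp Require Import all_boot all_order all_algebra.
From mathcomp Require Import reals ring lra zify.
Import Order.TTheory GRing.Theory Num.Theory.
Set Implicit Arguments. Unset Strict Implicit. Unset Printing Implicit Defensive.
Local Open Scope ring_scope.

Lemma dotvC (R : realType) n (u v : 'rV[R]_n) : dotv u v = dotv v u.
Proof. by rewrite /dotv; apply: eq_bigr => i _; rewrite mulrC. Qed.
Lemma dotvDl (R : realType) n (u v w : 'rV[R]_n) : dotv (u + v) w = dotv u w + dotv v w.
Proof. by rewrite /dotv -big_split; apply: eq_bigr => i _; rewrite mxE mulrDl. Qed.
Lemma dotvDr (R : realType) n (u v w : 'rV[R]_n) : dotv w (u + v) = dotv w u + dotv w v.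
Proof. by rewrite dotvC dotvDl !(dotvC w). Qed.
Lemma dotvZl (R : realType) n (a : R) (u v : 'rV[R]_n) : dotv (a *: u) v = a * dotv u v.
Proof. by rewrite /dotv mulr_sumr; apply: eq_bigr => i _; rewrite mxE mulrA. Qed.
Lemma dotvZr (R : realType) n (a : R) (u v : 'rV[R]_n) : dotv v (a *: u) = a * dotv v u.
Proof. by rewrite dotvC dotvZl dotvC. Qed.
Lemma dotvNl (R : realType) n (u v : 'rV[R]_n) : dotv (- u) v = - dotv u v.
Proof. by rewrite -scaleN1r dotvZl mulN1r. Qed.
Lemma dotvNr (R : realType) n (u v : 'rV[R]_n) : dotv v (- u) = - dotv v u.
Proof. by rewrite dotvC dotvNl dotvC. Qed.
Lemma dotv0l (R : realType) n (v : 'rV[R]_n) : dotv 0 v = 0.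
Proof. by rewrite -(scale0r 0) dotvZl mul0r. Qed.
Lemma dotv_ge0 (R : realType) n (u : 'rV[R]_n) : 0 <= dotv u u.
Proof. by rewrite /dotv; apply: sumr_ge0 => i _; rewrite -expr2 sqr_ge0. Qed.
Lemma enorm_sq (R : realType) n (u : 'rV[R]_n) : enorm u ^+ 2 = dotv u u.
Proof. by rewrite /enorm sqr_sqrtr // dotv_ge0. Qed.

Ltac dexp := rewrite ?(dotvDl, dotvDr, dotvNl, dotvNr, dotvZl, dotvZr).

Lemma lipsq (R : realType) n (l : R) (F : 'rV[R]_n -> 'rV[R]_n) x y :
  0 <= l -> lipschitz_op l F -> dotv (F x - F y) (F x - F y) <= l ^+ 2 * dotv (x - y) (x - y).
Proof.
move=> l0 H; rewrite -!enorm_sq -exprMn !expr2.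
have h1 : 0 <= enorm (F x - F y) by apply: sqrtr_ge0.
by apply: ler_pM => //; apply: H.
Qed.

Lemma min_nat (R : realType) (B : nat -> R) k :
  exists2 i, (i <= k)%N & forall j, (j <= k)%N -> B i <= B j.
Proof.
elim: k => [|k [i ik IH]].
  by exists 0%N => // j; rewrite leqn0 => /eqP ->.
case: (lerP (B i) (B k.+1)) => h.
  exists i; first by apply: leqW.
  move=> j; rewrite leq_eqVlt ltnS => /orP [/eqP -> //|]; exact: IH.
exists k.+1 => // j; rewrite leq_eqVlt ltnS => /orP [/eqP -> //|jk].
by apply: le_trans (ltW h) (IH j jk).
Qed.

Lemma block_sum (R : realType) (a : nat -> R) S k :
  \sum_(0 <= m < k * S) a m = \sum_(0 <= i < k) \sum_(0 <= s < S) a (i * S + s)%N.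
Proof.
elim: k => [|k IH]; first by rewrite mul0n !big_geq.
rewrite big_nat_recr //= -IH mulSnr (big_cat_nat _ (n := k * S)) ?leq_addr //=.
congr (_ + _).
rewrite -{1}(add0n (k * S)%N) big_addn addKn.
by apply: eq_bigr => i _; rewrite addnC.
Qed.

Lemma block_min (R : realType) (a : nat -> R) S k : (0 < k)%N ->
  exists2 i, (i < k)%N & k%:R * \sum_(0 <= s < S) a (i * S + s)%N <= \sum_(0 <= m < k * S) a m.
Proof.
move=> k0; rewrite block_sum.
have [i ik H] := min_nat (fun i => \sum_(0 <= s < S) a (i * S + s)%N) k.-1.
exists i; first by rewrite -ltnS prednK in ik.
have -> : k%:R * \sum_(0 <= s < S) a (i * S + s)%N = \sum_(0 <= j < k) \sum_(0 <= s < S) a (i * S + s)%N.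
  by rewrite sumr_const_nat subn0 mulr_natl.
apply: ler_sum_nat => j /andP [_ jk]; apply: H; by rewrite -ltnS prednK.
Qed.
Lemma nnB (R : realType) n (a b : 'rV[R]_n) : dotv (a - b) (a - b) = dotv (b - a) (b - a).
Proof. by rewrite -opprB dotvNl dotvNr opprK. Qed.

Lemma fb (R : realType) (a D eta s Y M : R) : 0 <= D -> 0 < eta -> 0 < s -> 0 < Y -> 0 <= M ->
  0 <= a -> Y * (eta ^+ 2 * s) * a <= (M * D) ^+ 2 ->
  Num.sqrt a <= M * D / (eta * Num.sqrt Y * Num.sqrt s).
Proof.
move=> D0 e0 s0 Y0 M0 a0 H.
have d0 : 0 < eta * Num.sqrt Y * Num.sqrt s by rewrite !mulr_gt0 ?sqrtr_gt0.
rewrite ler_pdivlMr //.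
have x0 : 0 <= Num.sqrt a * (eta * Num.sqrt Y * Num.sqrt s) by rewrite mulr_ge0 ?sqrtr_ge0 // ltW.
have y0 : 0 <= M * D by rewrite mulr_ge0.
have : (Num.sqrt a * (eta * Num.sqrt Y * Num.sqrt s)) ^+ 2 <= (M * D) ^+ 2.
  by rewrite !exprMn (sqr_sqrtr a0) (sqr_sqrtr (ltW Y0)) (sqr_sqrtr (ltW s0)); lra.
move=> h; nra.
Qed.

Lemma single_le (R : realType) (f : nat -> R) S s : (forall m, 0 <= f m) -> (s < S)%N ->
  f s <= \sum_(0 <= j < S) f j.
Proof.
move=> f0 sS; rewrite (big_cat_nat _ (n := s)) //= ?(ltnW sS) // (big_ltn sS).
have h1 : 0 <= \sum_(0 <= j < s) f j by apply: sumr_ge0.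
have h2 : 0 <= \sum_(s.+1 <= j < S) f j by apply: sumr_ge0.
lra.
Qed.

Lemma sum_mono (R : realType) (f : nat -> R) N M : (forall m, 0 <= f m) -> (N <= M)%N ->
  \sum_(0 <= j < N) f j <= \sum_(0 <= j < M) f j.
Proof.
move=> f0 NM; rewrite (big_cat_nat _ (n := N) (p := M)) //=.
have h2 : 0 <= \sum_(N <= j < M) f j by apply: sumr_ge0.
lra.
Qed.

Lemma natA S T : (3 * S < T)%N -> (S <= T)%N. Proof. lia. Qed.
Lemma natB u S v T : (u + S <= v)%N -> (v <= T)%N -> (u <= T - S)%N. Proof. lia. Qed.
Lemma natC T v S : (T < v + S)%N -> (S <= v)%N -> (T <= 2 * v)%N. Proof. lia. Qed.
Theorem lemma11 (R : realType) (n : nat) (F : 'rV[R]_n -> 'rV[R]_n) (l : R)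
  (zm1 zs : 'rV[R]_n) (z : nat -> 'rV[R]_n) (D eta : R) :
  monotone_op F -> 0 <= l -> lipschitz_op l F ->
  F zs = 0 ->
  Num.max (enorm (zs - z 0%N)) (enorm (zs - zm1)) <= D ->
  0 < eta -> eta * l * Num.sqrt 10 < 1 ->
  z 1%N = z 0%N - (2 * eta) *: F (z 0%N) + eta *: F zm1 ->
  (forall t : nat, z t.+2 = z t.+1 - (2 * eta) *: F (z t.+1) + eta *: F (z t)) ->
  (forall T : nat, (1 <= T)%N ->
     exists2 t : nat, (t <= T - 1)%N &
       enorm (F (z t)) <=
         4 * D / (eta * Num.sqrt T%:R * Num.sqrt (1 - 10 * eta ^+ 2 * l ^+ 2)))
  /\
  (forall T S : nat, (1 <= S)%N -> (S%:R : R) < T%:R / 3 ->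
     exists2 t : nat, (t <= T - S)%N &
       (forall s : nat, (s < S)%N ->
          enorm (F (z (t + s)%N)) <=
            6 * D / (eta * Num.sqrt (T%:R / S%:R)
                     * Num.sqrt (1 - 10 * eta ^+ 2 * l ^+ 2)))).
Proof.
move=> Hmon Hl0 Hlip HFzs HD Heta Hel Hz1 Hz.
pose Zp k := if k is k'.+1 then z k' else zm1.
pose G k := F (Zp k).
have HZ : forall k, Zp k.+2 = Zp k.+1 - (2*eta) *: G k.+1 + eta *: G k by case.
pose P k := dotv (Zp k.+1 + eta *: G k - zs) (Zp k.+1 + eta *: G k - zs).
have step1 : forall k, P k.+1 <= P k + eta^+2 * dotv (G k.+1 - G k) (G k.+1 - G k)
                                 - eta^+2 * dotv (G k) (G k).
  move=> k.
  have m : 0 <= eta * dotv (G k.+1) (Zp k.+1 - zs).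
    by apply: mulr_ge0; [exact: ltW | have := Hmon zs (Zp k.+1); rewrite HFzs subr0].
  rewrite /P HZ; move: m.
  set X := Zp k.+1; set g := G k.+1; set h := G k.
  dexp; rewrite ?(dotvC zs X) ?(dotvC g X) ?(dotvC h X) ?(dotvC g zs) ?(dotvC h zs) ?(dotvC h g).
  move=> m; lra.
have e10 : eta ^+ 2 * l ^+ 2 * 10 < 1.
  have x0 : 0 <= eta * l * Num.sqrt 10 by rewrite mulr_ge0 ?sqrtr_ge0 // mulr_ge0 // ltW.
  have : (eta * l * Num.sqrt 10) ^+ 2 < 1 by rewrite expr2; nra.
  by rewrite !exprMn sqr_sqrtr.
have lipG : forall a b, dotv (G a - G b) (G a - G b) <= l ^+ 2 * dotv (Zp a - Zp b) (Zp a - Zp b).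
  by move=> a b; apply: lipsq.
pose c := eta ^+ 2 * (1 - 10 * eta ^+ 2 * l ^+ 2).
pose A k := dotv (G k) (G k).
have A0 : forall k, 0 <= A k by move=> k; apply: dotv_ge0.
have step2 : forall k, P k.+2 + 2 * eta^+4 * l^+2 * A k.+1 <= P k.+1 + 2 * eta^+4 * l^+2 * A k - c * A k.+1.
  move=> k.
  have h1 := step1 k.+1.
  have h2 := lipG k.+2 k.+1.
  have h3 : dotv (Zp k.+2 - Zp k.+1) (Zp k.+2 - Zp k.+1) <= 8 * eta^+2 * A k.+1 + 2 * eta^+2 * A k.
    have := dotv_ge0 (2 *: G k.+1 + G k).
    rewrite /A HZ; set X := Zp k.+1; set g := G k.+1; set h := G k.
    dexp; rewrite ?(dotvC g X) ?(dotvC h X) ?(dotvC h g).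
    move=> q; have q2 := mulr_ge0 (sqr_ge0 eta) q; move: q2; clear; move=> q2; lra.
  have h4 := ler_wpM2l (sqr_ge0 eta) (le_trans h2 (ler_wpM2l (sqr_ge0 l) h3)).
  rewrite /c /A in h1 h4 *; lra.
pose Q k := P k.+1 + 2 * eta^+4 * l^+2 * A k.
have sumQ : forall N, c * \sum_(0 <= m < N) A m.+1 + Q N <= Q 0%N.
  elim=> [|N IH]; first by rewrite big_geq // mulr0 add0r.
  rewrite big_nat_recr //= mulrDr.
  have := step2 N; rewrite /Q in IH *; lra.
have [D0 D1] : enorm (zs - z 0%N) <= D /\ enorm (zs - zm1) <= D.
  by move: HD; rewrite ge_max => /andP.
have nD : forall u : 'rV[R]_n, enorm u <= D -> dotv u u <= D ^+ 2.
  move=> u h; rewrite -enorm_sq expr2 expr2.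
  have h0 : 0 <= enorm u by apply: sqrtr_ge0.
  exact: ler_pM.
have Dge0 : 0 <= D by apply: le_trans D0; apply: sqrtr_ge0.
have hd0 := nD _ D0; have hd1 := nD _ D1.
have hA0 : A 0%N <= l ^+ 2 * dotv (zs - zm1) (zs - zm1).
  have := lipsq zm1 zs Hl0 Hlip; rewrite HFzs subr0 nnB; exact.
have hQ0 : Q 0%N <= 3 * D ^+ 2.
  have h1 := step1 0%N.
  have h2 := lipG 1%N 0%N.
  have h3 : dotv (Zp 1%N - Zp 0%N) (Zp 1%N - Zp 0%N) <=
            2 * dotv (zs - z 0%N) (zs - z 0%N) + 2 * dotv (zs - zm1) (zs - zm1).
    have := dotv_ge0 (z 0%N + zm1 - 2 *: zs); rewrite /=.
    set a := z 0%N; set b := zm1.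
    dexp; rewrite ?(dotvC b a) ?(dotvC zs a) ?(dotvC zs b) => q; lra.
  have h4 : P 0%N <= 2 * dotv (zs - z 0%N) (zs - z 0%N) + 2 * eta ^+ 2 * A 0%N.
    have := dotv_ge0 (z 0%N - zs - eta *: G 0%N); rewrite /P /A /=.
    set a := z 0%N; set h := G 0%N.
    dexp; rewrite ?(dotvC zs a) ?(dotvC h a) ?(dotvC h zs) => q; lra.
  have h5 := ler_wpM2l (sqr_ge0 eta) (le_trans h2 (ler_wpM2l (sqr_ge0 l) h3)).
  have h6 := ler_wpM2l (sqr_ge0 eta) hA0.
  have A00 := A0 0%N.
  have hd0' := dotv_ge0 (zs - z 0%N).
  have hd1' := dotv_ge0 (zs - zm1).
  have e0 : 0 <= eta ^+ 2 * l ^+ 2 by rewrite mulr_ge0 ?sqr_ge0.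
  move: h1 h4 h5 h6; rewrite /Q /A.
  set e := eta ^+ 2 * l ^+ 2.
  set d0 := dotv (zs - z 0%N) (zs - z 0%N).
  set d1 := dotv (zs - zm1) (zs - zm1).
  set a0 := dotv (G 0%N) (G 0%N).
  set p0 := P 0%N; set p1 := P 1%N.
  set n0 := dotv (G 1%N - G 0%N) (G 1%N - G 0%N).
  have -> : 2 * eta ^+ 4 * l ^+ 2 * a0 = 2 * e * (eta ^+ 2 * a0) by rewrite /e; ring.
  have -> : eta ^+ 2 * (l ^+ 2 * (2 * d0 + 2 * d1)) = 2 * e * (d0 + d1) by rewrite /e; ring.
  have -> : eta ^+ 2 * (l ^+ 2 * d1) = e * d1 by rewrite /e; ring.
  have ea0 : 0 <= eta ^+ 2 * a0 by rewrite mulr_ge0 ?sqr_ge0.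
  have e1 : e * 10 < 1 by [].
  have g0 : d0 <= D ^+ 2 by []. have g1 : d1 <= D ^+ 2 by [].
  have g2 : 0 <= d0 by []. have g3 : 0 <= d1 by []. have g4 : 0 <= e by [].
  move: e1 g0 g1 g2 g3 g4 ea0; rewrite -[2 * eta ^+ 2 * a0]mulrA; set x := eta ^+ 2 * a0.
  move=> e1 g0 g1 g2 g3 g4 ea0 h1 h4 h5 h6.
  have h7 : p1 <= 2 * d0 + 2 * e * (d0 + d1) + x by lra.
  have h8 : 2 * e * x <= 2 * e * (e * d1) by apply: ler_wpM2l => //; lra.
  have : 2 * d0 + 2 * e * (d0 + d1) + (1 + 2 * e) * x <= 3 * D ^+ 2.
    clear -e1 g0 g1 g2 g3 g4 ea0 h6; nra.
  lra.
have hs : 0 < 1 - 10 * eta ^+ 2 * l ^+ 2 by lra.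
have c0 : 0 < c by rewrite /c mulr_gt0 // exprn_gt0.
have key : forall N, c * \sum_(0 <= m < N) A m.+1 <= 3 * D ^+ 2.
  move=> N; have := sumQ N.
  have : 0 <= Q N.
    rewrite /Q; apply: addr_ge0; first exact: dotv_ge0.
    by rewrite !mulr_ge0 ?sqr_ge0 ?exprn_ge0 // ltW.
  move=> q1 q2; lra.
have Aa : forall m, A m.+1 = dotv (F (z m)) (F (z m)) by [].
split.
  move=> T T1.
  have [i iT H] := block_min (fun m => A m.+1) 1%N T1.
  exists i; first by rewrite subn1 -ltnS prednK.
  rewrite /enorm -Aa; apply: fb => //; first by rewrite ltr0n.
  move: H; rewrite big_nat1 !muln1 addn0 => H.
  have := ler_wpM2l (ltW c0) H.
  have := key T.
  move: (A i.+1) (A0 i.+1) => x x0.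
  set ST := \sum_(0 <= m < T) A m.+1.
  rewrite /c => k1 k2.
  have h : (T%:R * x) * (eta ^+ 2 * (1 - 10 * eta ^+ 2 * l ^+ 2)) <= 3 * D ^+ 2 by clear -k1 k2 x0; lra.
  have : 0 <= D ^+ 2 by apply: sqr_ge0.
  move=> d2; rewrite expr2 in h d2 *; clear -h d2; lra.
move=> T S S1 HST.
have hTS : (3 * S < T)%N.
  by move: HST; rewrite ltr_pdivlMr // -natrM ltr_nat mulnC.
pose k := (T %/ S)%N.
have k0 : (0 < k)%N by rewrite divn_gt0 //; apply: natA hTS.
have [i ik H] := block_min (fun m => A m.+1) S k0.
have kS : (k * S <= T)%N := leq_divM T S.
have Tk : (T < k.+1 * S)%N := ltn_ceil T S1.
have iS : (i.+1 * S <= k * S)%N by rewrite leq_mul2r ik orbT.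
exists (i * S)%N; first by move: iS; rewrite mulSnr => iS; apply: natB iS kS.
move=> s sS.
rewrite /enorm -Aa; apply: fb => //.
  by rewrite divr_gt0 // ltr0n // (leq_ltn_trans (leq0n _) hTS).
set a := A (i * S + s)%N.+1.
set B := \sum_(0 <= s < S) A (i * S + s)%N.+1.
set ST := \sum_(0 <= m < T) A m.+1.
have s1 : a <= B by rewrite /a /B; exact: (single_le (f := fun s => A (i * S + s)%N.+1) (fun m => A0 _) sS).
have s2 : k%:R * B <= ST by apply: le_trans H _; apply: sum_mono.
have s3 : c * ST <= 3 * D ^+ 2 := key T.
have s4 : (T%:R : R) / S%:R <= 2 * k%:R.
  have hn : (T <= 2 * (k * S))%N by apply: (natC (v := (k * S)%N)); [move: Tk; rewrite mulSnr | exact: leq_pmull].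
  rewrite ler_pdivrMr ?ltr0n //.
  have hr : (T%:R : R) <= (2 * (k * S))%:R by rewrite ler_nat.
  by rewrite natrM natrM mulrA in hr.

have a0 : 0 <= a by apply: A0.
have B0 : 0 <= B by apply: le_trans s1.
have h1 := ler_wpM2r (mulr_ge0 (ltW c0) a0) s4.
have h2 := ler_wpM2l (ler0n _ k) s1.
have h3 := ler_wpM2l (ltW c0) (le_trans h2 s2).
have d2 : 0 <= D ^+ 2 by apply: sqr_ge0.
move: h1 h3 s3; rewrite /c.
set cc := eta ^+ 2 * (1 - 10 * eta ^+ 2 * l ^+ 2).
move=> h1 h3 s3.
have : T%:R / S%:R * cc * a <= 6 * D ^+ 2.
  have e : T%:R / S%:R * cc * a = T%:R / S%:R * (cc * a) by ring.
  rewrite e; apply: le_trans h1 _.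
  have e2 : 2 * k%:R * (cc * a) = 2 * (cc * (k%:R * a)) by ring.
  rewrite e2; clear -h3 s3; lra.
move=> h; rewrite expr2 in h d2 *; clear -h d2; lra.
Qed.
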